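(* Let $n\ge2$ and $\mathbf{x}\in[0,1]^n$ with $0\le x_1\le\dots\le x_n\le1$ and $\sum_{i=1}^nx_i\le1$. Let $f:2^{[n]}\to\mathbb{R}_+$ be monotone submodular and suppose either (i) $f(\{n\})=\max_{i\in[n]}f(\{i\})$, or (ii) $f(\{i\})$ is the same constant for all $i\in[n]$. Then $f^{+}(\mathbf{x})/f^{++}(\mathbf{x})\le4/3$ (with the convention $0/0=1$).
   Context: $[n]=\{1,\dots,n\}$. A set function $f:2^{[n]}\to\mathbb{R}_+$ is monotone if $f(S)\le f(T)$ for $S\subseteq T$, submodular if $f(S)+f(T)\ge f(S\cap T)+f(S\cup T)$. For $\mathbf{x}\in[0,1]^n$: the concave closure $f^{+}(\mathbf{x})=\max\sum_{S\subseteq[n]}\theta(S)f(S)$ over $\theta:2^{[n]}\to\mathbb{R}_{\ge0}$ with $\sum_S\theta(S)=1$ and $\sum_{S\ni i}\theta(S)=x_i$ for all $i$; the upper pairwise independent extension $f^{++}(\mathbf{x})$ is the same maximum with the additional constraints $\sum_{S\ni i,j}\theta(S)=x_ix_j$ for all $i<j$. *)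

(* Defs.v *)
From HB Require Import structures.
From mathcomp Require Import all_boot all_order all_algebra.
From mathcomp Require Import boolp classical_sets reals.
Set Implicit Arguments. Unset Strict Implicit. Unset Printing Implicit Defensive.
Import Order.TTheory GRing.Theory Num.Theory.
Local Open Scope ring_scope.
Local Open Scope classical_set_scope.

Section Defs.
Variables (R : realType) (n : nat).

Definition monotone_setfun (f : {set 'I_n} -> R) : Prop :=
  forall S T : {set 'I_n}, S \subset T -> f S <= f T.

Definition submodular (f : {set 'I_n} -> R) : Prop :=
  forall S T : {set 'I_n}, f (S :&: T) + f (S :|: T) <= f S + f T.

Definition marginal_feasible (x : 'I_n -> R) (theta : {set 'I_n} -> R) : Prop :=
  (forall S, 0 <= theta S) /\
  \sum_(S : {set 'I_n}) theta S = 1 /\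
  (forall i : 'I_n, \sum_(S : {set 'I_n} | i \in S) theta S = x i).

Definition pairwise_feasible (x : 'I_n -> R) (theta : {set 'I_n} -> R) : Prop :=
  marginal_feasible x theta /\
  (forall i j : 'I_n, (i < j)%N ->
     \sum_(S : {set 'I_n} | (i \in S) && (j \in S)) theta S = x i * x j).

Definition concave_closure (f : {set 'I_n} -> R) (x : 'I_n -> R) : R :=
  sup [set v | exists theta, marginal_feasible x theta /\
                 v = \sum_(S : {set 'I_n}) theta S * f S].

Definition upper_pairwise_ext (f : {set 'I_n} -> R) (x : 'I_n -> R) : R :=
  sup [set v | exists theta, pairwise_feasible x theta /\
                 v = \sum_(S : {set 'I_n}) theta S * f S].

End Defs.

(* Main.v *)
Require Import Defs.
From HB Require Import structures.
From mathcomp Require Import all_boot all_order all_algebra.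
From mathcomp Require Import boolp classical_sets reals.
From mathcomp Require Import ring lra.
From mathcomp Require Import fintype finset.
Import Order.TTheory GRing.Theory Num.Theory.
Local Open Scope ring_scope.

Section Aux.
Variables (R : realType) (n : nat).
Implicit Types (S Q : {set 'I_n}).

Lemma prod_sum (a b : 'I_n -> R) :
  \sum_(S : {set 'I_n}) \prod_i (if i \in S then a i else b i) = \prod_i (a i + b i).
Proof. by rewrite bigA_distr. Qed.

Definition th1 (p : 'I_n -> R) S := \prod_i (if i \in S then p i else 1 - p i).

Lemma th1_sub (p : 'I_n -> R) Q :
  \sum_(S : {set 'I_n}) th1 p S * (Q \subset S)%:R = \prod_(k in Q) p k.
Proof.
transitivity (\sum_(S : {set 'I_n}) \prod_k (if k \in S then p k else
   (if k \in Q then 0 else 1 - p k))).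
  apply: eq_bigr => S _; rewrite /th1.
  case: (boolP (Q \subset S)) => HQ.
    rewrite mulr1; apply: eq_bigr => k _.
    case: (boolP (k \in S)) => // kS.
    by rewrite (contraNF (fun kQ => subsetP HQ k kQ) kS).
  rewrite mulr0; have [k kQ kS] := subsetPn HQ.
  by rewrite (bigD1 k) //= (negbTE kS) kQ mul0r.
rewrite prod_sum [RHS]big_mkcond /=; apply: eq_bigr => k _.
by case: (k \in Q); rewrite ?addr0 // addrC subrK.
Qed.

Lemma sum_eq1 (T : finType) (a : T) (h : T -> R) :
  \sum_(S : T) (S == a)%:R * h S = h a.
Proof.
rewrite (bigD1 a) //= eqxx mul1r big1 ?addr0 // => S /negbTE ->.
by rewrite mul0r.
Qed.

Lemma sub_bound (f : {set 'I_n} -> R) : submodular f ->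
  forall S, f S <= f set0 + \sum_(i in S) (f [set i] - f set0).
Proof.
move=> sm S; have [k] := ubnP #|S|; elim: k S => // k IH S.
case: (set_0Vmem S) => [->|[i iS]].
  by rewrite big_set0 addr0.
rewrite ltnS => hk.
rewrite (big_setD1 i iS) /=.
have h1 : (#|S :\ i| < k)%N.
  by apply: leq_trans hk; rewrite (cardsD1 i S) iS.
have := IH _ h1; have := sm (S :\ i) [set i].
have -> : (S :\ i) :&: [set i] = set0.
  by apply/setP => j; rewrite !inE; case: (j == i); rewrite ?andbF.
rewrite setUC setD1K // => h2 h3.
lra.
Qed.


Lemma sum_ind (P : pred {set 'I_n}) (w : {set 'I_n} -> R) :
  \sum_(S | P S) w S = \sum_(S : {set 'I_n}) w S * (P S)%:R.
Proof.
by rewrite big_mkcond; apply: eq_bigr => S _; case: (P S); rewrite ?mulr1 ?mulr0.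
Qed.

Definition th0 (x : 'I_n -> R) (s : R) S :=
  (S == set0)%:R * (1 - s) + \sum_i (S == [set i])%:R * x i.

Lemma th0_sum x s (g : {set 'I_n} -> R) :
  \sum_(S : {set 'I_n}) th0 x s S * g S = (1 - s) * g set0 + \sum_i x i * g [set i].
Proof.
rewrite /th0.
under eq_bigr => S _ do rewrite mulrDl big_distrl /=.
rewrite big_split /=; congr (_ + _).
  by under eq_bigr => S _ do rewrite -mulrA; rewrite sum_eq1.
rewrite exchange_big /=; apply: eq_bigr => i _.
by under eq_bigr => S _ do rewrite -mulrA; rewrite sum_eq1 mulrC.
Qed.

Definition theta (a b c : R) p x s S :=
  a * th1 p S + b * th0 x s S + c * (S == set0)%:R.

Lemma theta_sum a b c p x s (g : {set 'I_n} -> R) :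
  \sum_(S : {set 'I_n}) theta a b c p x s S * g S =
  a * (\sum_(S : {set 'I_n}) th1 p S * g S)
  + b * ((1 - s) * g set0 + \sum_i x i * g [set i]) + c * g set0.
Proof.
rewrite -th0_sum /theta.
under eq_bigr => S _ do rewrite !mulrDl.
rewrite !big_split /= !big_distrr /=; congr (_ + _ + _).
- by apply: eq_bigr => S _; rewrite mulrA.
- by apply: eq_bigr => S _; rewrite mulrA.
- rewrite -(sum_eq1 _ (set0 : {set 'I_n}) g) big_distrr /=.
  by apply: eq_bigr => S _; rewrite mulrA.
Qed.

Lemma upper (f : {set 'I_n} -> R) x th : submodular f -> marginal_feasible x th ->
  \sum_(S : {set 'I_n}) th S * f S <= f set0 + \sum_i x i * (f [set i] - f set0).
Proof.
move=> sm [h0 [h1 h2]].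
apply: le_trans (_ : \sum_(S : {set 'I_n}) th S * (f set0 +
   \sum_(i in S) (f [set i] - f set0)) <= _).
  by apply: ler_sum => S _; apply: ler_wpM2l => //; apply: sub_bound.
under eq_bigr => S _ do rewrite mulrDr big_distrr big_mkcond /=.
rewrite big_split /= -big_distrl /= h1 mul1r lerD2l.
rewrite exchange_big /= le_eqVlt; apply/orP; left; apply/eqP.
apply: eq_bigr => i _; rewrite -h2 big_distrl /= [RHS]big_mkcond /=.
by apply: eq_bigr => S _; case: (i \in S).
Qed.

End Aux.
Arguments th1 {R n}.
Arguments th0 {R n}.
Arguments theta {R n}.
Lemma alg (R : realType) (F0 Dl A t xl : R): 0<=F0 -> 0<=Dl -> 0<=A -> 0<=t -> 0<=xl -> t + xl <= 1 -> A <= Dl*t ->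
 F0 + (xl*Dl + A) <= 4%:R/3%:R * (xl*xl*(F0+Dl) + (1-xl)*((1-(xl+t))*F0 + ((xl+t)*F0 + (xl*Dl + A))) + xl*(1-xl)*F0).
Proof.
move=> h1 h2 h3 h4 h5 h6 h7.
have e : forall y : R, 4%:R/3%:R * y = (4 * y) / 3 by move=> y; field.
rewrite e ler_pdivlMr; last by lra.
case: (lerP (4 * xl) 1) => hx.
  have : 0 <= A * (1 - 4 * xl) by apply: mulr_ge0; lra.
  nra.
have q1 : 0 <= (Dl * t - A) * (4 * xl - 1) by apply: mulr_ge0; lra.
have q2 : 0 <= Dl * ((1 - xl - t) * (4 * xl - 1)) by apply: mulr_ge0 => //; apply: mulr_ge0; lra.
have q3 : 0 <= Dl * ((2 * xl - 1) * (2 * xl - 1)) by apply: mulr_ge0 => //; rewrite -expr2 sqr_ge0.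
nra.
Qed.

Theorem mainTheorem12 (R : realType) (n : nat) (f : {set 'I_n} -> R)
  (x : 'I_n -> R) :
  (2 <= n)%N ->
  (forall i, 0 <= x i) -> (forall i, x i <= 1) ->
  (forall i j : 'I_n, (i <= j)%N -> x i <= x j) ->
  \sum_(i : 'I_n) x i <= 1 ->
  (forall S, 0 <= f S) ->
  monotone_setfun f -> submodular f ->
  ((forall last : 'I_n, val last = n.-1 ->
      forall i : 'I_n, f [set i] <= f [set last])
   \/ (exists c : R, forall i : 'I_n, f [set i] = c)) ->
  concave_closure f x <= 4%:R / 3%:R * upper_pairwise_ext f x.
Proof.
move=> hn x0 x1 xmono xs f0 mono sm hyp.
have ln : (n.-1 < n)%N by rewrite ltn_predL (leq_trans _ hn).
pose l : 'I_n := Ordinal ln.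
have hlast : forall i : 'I_n, f [set i] <= f [set l].
  case: hyp => [H|[c H]] i; first exact: H.
  by rewrite !H.
have xle : forall i, x i <= x l.
  move=> i; apply: xmono => /=.
  by rewrite -ltnS prednK ?ltn_ord // (leq_trans _ hn).
pose s := \sum_i x i.
pose xl := x l.
pose p := fun i => x i / xl.
pose a := xl * xl; pose b := 1 - xl; pose c := xl * (1 - xl).
pose th := theta a b c p x s.
have xl0 : 0 <= xl := x0 l.
have xl1 : xl <= 1 := x1 l.
have ap : forall i, a * p i = xl * x i.
  move=> i; rewrite /a /p; have [->|nz] := eqVneq xl 0; first by rewrite !mul0r.
  by field.
have pp : forall i j, a * (p i * p j) = x i * x j.
  move=> i j; rewrite mulrA ap /p; have [e|nz] := eqVneq xl 0.
    have : x i = 0 by apply/le_anti; rewrite x0 andbT -/xl -e xle.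
    by move->; rewrite mulr0 !mul0r.
  by field.
have p0 : forall i, 0 <= p i by move=> i; apply: divr_ge0.
have p1 : forall i, p i <= 1.
  move=> i; rewrite /p; have [->|nz] := eqVneq xl 0; first by rewrite invr0 mulr0.
  have xlp : 0 < xl by rewrite lt_def nz xl0.
  by rewrite ler_pdivrMr // mul1r xle.
have th1_ge0 : forall S, 0 <= th1 p S.
  move=> S; apply: prodr_ge0 => i _; case: (i \in S) => //; rewrite subr_ge0 //.
have th_ge0 : forall S, 0 <= th S.
  move=> S; rewrite /th /theta; apply: addr_ge0; first apply: addr_ge0.
  - by apply: mulr_ge0 => //; apply: mulr_ge0.
  - apply: mulr_ge0; first by rewrite subr_ge0.
    rewrite /th0; apply: addr_ge0; first by apply: mulr_ge0; rewrite ?ler0n ?subr_ge0.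
    by apply: sumr_ge0 => i _; apply: mulr_ge0.
  - by apply: mulr_ge0; [apply: mulr_ge0; rewrite // subr_ge0|].
have pf : pairwise_feasible x th.
  split; first split; [|split|].
  - exact: th_ge0.
  - transitivity (\sum_(S : {set 'I_n}) th S * (set0 \subset S)%:R).
      by apply: eq_bigr => S _; rewrite sub0set mulr1.
    rewrite theta_sum th1_sub big_set0 !sub0set.
    under eq_bigr => i _ do rewrite sub0set mulr1.
    rewrite -/s /a /b /c /=; ring.
  - move=> i; rewrite sum_ind theta_sum.
    under eq_bigr => S _ do rewrite -sub1set.
    rewrite th1_sub big_set1 ap in_set0 /=.
    under eq_bigr => k _ do rewrite in_set1 eq_sym mulrC.
    rewrite sum_eq1 /b /c; ring.
  - move=> i j ij; rewrite sum_ind theta_sum.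
    have nij : i != j by rewrite neq_ltn ij.
    under eq_bigr => S _ do rewrite -!sub1set -subUset.
    rewrite th1_sub big_setU1 /=; last by rewrite in_set1.
    rewrite big_set1 pp in_set0 /= big1.
      by rewrite !(mulr0, addr0).
    move=> k _; rewrite !in_set1.
    case: (eqVneq i k) => [<-|]; last by rewrite mulr0.
    by rewrite eq_sym (negbTE nij) mulr0.
pose V0 := \sum_(S : {set 'I_n}) th S * f S.
pose U := f set0 + \sum_i x i * (f [set i] - f set0).
have ubd : forall th', marginal_feasible x th' ->
    \sum_(S : {set 'I_n}) th' S * f S <= U by move=> th' h; exact: upper.
have hL : xl * xl * f [set l] + b * ((1 - s) * f set0 + \sum_i x i * f [set i])
    + c * f set0 <= V0.
  rewrite /V0 theta_sum !lerD2r.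
  have -> : xl * xl * f [set l] = a * (\sum_(S : {set 'I_n}) th1 p S *
      (([set l] \subset S)%:R * f [set l])).
    rewrite (eq_bigr (fun S => th1 p S * ([set l] \subset S)%:R * f [set l]));
      last by move=> S _; rewrite mulrA.
    by rewrite -big_distrl /= th1_sub big_set1 mulrA ap.
  apply: ler_wpM2l; first by apply: mulr_ge0.
  apply: ler_sum => S _; apply: ler_wpM2l => //.
  case: (boolP ([set l] \subset S)) => h; first by rewrite mul1r; apply: mono.
  by rewrite mul0r.
have hUL : U <= 4%:R / 3%:R * (xl * xl * f [set l] + b * ((1 - s) * f set0
    + \sum_i x i * f [set i]) + c * f set0).
  pose t := \sum_(i | i != l) x i.
  pose D := fun i => f [set i] - f set0.
  pose A := \sum_(i | i != l) x i * D i.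
  have hs : s = xl + t by rewrite /s (bigD1 l).
  have hS1 : \sum_i x i * D i = xl * D l + A by rewrite (bigD1 l).
  have hS2 : \sum_i x i * f [set i] = s * f set0 + (xl * D l + A).
    rewrite -hS1 /s big_distrl -big_split /=; apply: eq_bigr => i _.
    by rewrite /D; ring.
  have hA0 : 0 <= A.
    apply: sumr_ge0 => i _; apply: mulr_ge0 => //; rewrite /D subr_ge0.
    by apply: mono; rewrite sub0set.
  have hAt : A <= D l * t.
    rewrite /t big_distrr /=; apply: ler_sum => i _; rewrite mulrC.
    by apply: ler_wpM2r => //; rewrite /D lerD2r.
  have ht0 : 0 <= t by apply: sumr_ge0.
  have hDl : 0 <= D l by rewrite /D subr_ge0; apply: mono; rewrite sub0set.
  rewrite /U -/(D _) hS1 hS2 hs /b /c.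
  have -> : f [set l] = f set0 + D l by rewrite /D; ring.
  apply: alg => //.
  by rewrite addrC -hs.
rewrite /concave_closure /upper_pairwise_ext.
apply: (@le_trans _ _ U).
  apply: ge_sup; first by exists V0, th; split => //; exact: pf.1.
  by move=> v [th' [hf ->]]; exact: ubd.
apply: (le_trans hUL); apply: ler_wpM2l; first by apply: divr_ge0.
apply: (le_trans hL); apply: ub_le_sup.
  by exists U => v [th' [[hf _] ->]]; exact: ubd.
by exists th.
Qed.
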